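(* Let $X$ be a CAT(0) Euclidean polygonal complex and let $x_1,x_2,x_3,x_4\in X$. If $\overline{x_1x_2}\cap\overline{x_3x_4}\neq\emptyset$, then $$\overline{x_1x_3}\cap\overline{x_2x_4}\subseteq\overline{x_1x_2}\cap\overline{x_3x_4}\quad\text{and}\quad\overline{x_1x_4}\cap\overline{x_2x_3}\subseteq\overline{x_1x_2}\cap\overline{x_3x_4}.$$ Hence, for $\{i,j,k,l\}=\{i',j',k',l'\}=\{1,2,3,4\}$, we have $\overline{x_ix_j}\cap\overline{x_kx_l}=\overline{x_{i'}x_{j'}}\cap\overline{x_{k'}x_{l'}}$ whenever both intersections are non-empty.
   Context: A CAT(0) Euclidean polygonal complex is a 2-dimensional polygonal complex whose cells are convex Euclidean polygons, with its induced length metric, assumed CAT(0). $\overline{ab}$ denotes the unique geodesic segment between $a$ and $b$. *)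

(* Defs.v *)
From Stdlib Require Import Reals Lra List Permutation.
Import ListNotations.
Open Scope R_scope.

Definition pt2 := (R * R)%type.

Definition edist (a b : pt2) : R :=
  sqrt ((fst a - fst b)^2 + (snd a - snd b)^2).

Fixpoint wsum (w : list R) (L : list pt2) : pt2 :=
  match w, L with
  | a :: w', p :: L' =>
      let s := wsum w' L' in (fst s + a * fst p, snd s + a * snd p)
  | _, _ => (0, 0)
  end.

Definition in_hull (L : list pt2) (v : pt2) : Prop :=
  exists w : list R, length w = length L /\ Forall (Rle 0) w /\
    fold_right Rplus 0 w = 1 /\ v = wsum w L.

(** A face of the convex polytope conv(L): its intersection with a
    supporting line {a x + b y = c} (a = b = c = 0 gives the whole cell). *)
Definition face (L : list pt2) (F : pt2 -> Prop) : Prop :=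
  exists a b c : R,
    (forall w, in_hull L w -> a * fst w + b * snd w <= c) /\
    (forall v, F v <-> (in_hull L v /\ a * fst v + b * snd v = c)).

Definition is_metric {X : Type} (d : X -> X -> R) : Prop :=
  (forall x y, d x y = 0 <-> x = y) /\
  (forall x y, d x y = d y x) /\
  (forall x y z, d x z <= d x y + d y z).

Definition geodesic {X : Type} (d : X -> X -> R) (g : R -> X) (a b : X) : Prop :=
  g 0 = a /\ g (d a b) = b /\
  forall s t, 0 <= s <= d a b -> 0 <= t <= d a b -> d (g s) (g t) = Rabs (s - t).

(** The geodesic segment [a,b] (as a set); in a CAT(0) space the geodesic
    is unique, so this is the image of the unique geodesic. *)
Definition seg {X : Type} (d : X -> X -> R) (a b : X) (z : X) : Prop :=
  exists g, geodesic d g a b /\ exists t, 0 <= t <= d a b /\ z = g t.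

Definition cpt (A B : pt2) (L s : R) : pt2 :=
  (fst A + s / L * (fst B - fst A), snd A + s / L * (snd B - snd A)).

(** CAT(0) inequality (Bridson--Haefliger): for every geodesic triangle and
    every pair of points on its sides, their distance is at most the
    Euclidean distance of the corresponding points of a comparison triangle. *)
Definition cat0_ineq {X : Type} (d : X -> X -> R) : Prop :=
  forall (x y z : X) (g1 g2 g3 : R -> X),
    geodesic d g1 x y -> geodesic d g2 y z -> geodesic d g3 z x ->
    forall A B C : pt2,
      edist A B = d x y -> edist B C = d y z -> edist C A = d z x ->
      let sides := [(g1, A, B, d x y); (g2, B, C, d y z); (g3, C, A, d z x)] in
      forall S1 S2, In S1 sides -> In S2 sides ->
      match S1, S2 with
      | (h1, P1, Q1, L1), (h2, P2, Q2, L2) =>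
          forall s t, 0 <= s <= L1 -> 0 <= t <= L2 ->
            d (h1 s) (h2 t) <= edist (cpt P1 Q1 L1 s) (cpt P2 Q2 L2 t)
      end.

Definition CAT0 {X : Type} (d : X -> X -> R) : Prop :=
  is_metric d /\
  (forall a b : X, exists g, geodesic d g a b) /\
  cat0_ineq d.

(** * Euclidean polygonal complexes (Bridson--Haefliger, Def. I.7.37, n = 2)
    Cells indexed by I; cell i is the convex polytope conv(verts i) in R^2
    (a vertex, an edge or a convex polygon), mapped into X by phi i. *)
Definition polygonal_complex {X I : Type}
  (verts : I -> list pt2) (phi : I -> pt2 -> X) : Prop :=
  (forall i, verts i <> nil) /\
  (forall i v w, in_hull (verts i) v -> in_hull (verts i) w ->
     phi i v = phi i w -> v = w) /\
  (forall x : X, exists i v, in_hull (verts i) v /\ phi i v = x) /\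
  (forall i j v w, in_hull (verts i) v -> in_hull (verts j) w ->
     phi i v = phi j w ->
     exists (T T' : pt2 -> Prop) (h : pt2 -> pt2),
       face (verts i) T /\ face (verts j) T' /\ T v /\ T' w /\
       (forall y, T y -> T' (h y)) /\
       (forall y', T' y' -> exists y, T y /\ h y = y') /\
       (forall y z, T y -> T z -> edist (h y) (h z) = edist y z) /\
       (forall y, T y -> phi j (h y) = phi i y)).

Fixpoint chain {X I : Type} (verts : I -> list pt2) (phi : I -> pt2 -> X)
  (st : list (I * pt2 * pt2)) (x y : X) : Prop :=
  match st with
  | nil => x = y
  | (i, v, w) :: rest =>
      in_hull (verts i) v /\ in_hull (verts i) w /\ phi i v = x /\
      chain verts phi rest (phi i w) y
  end.

Fixpoint chain_len {I : Type} (st : list (I * pt2 * pt2)) : R :=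
  match st with
  | nil => 0
  | (_, v, w) :: rest => edist v w + chain_len rest
  end.

Definition intrinsic_metric {X I : Type}
  (verts : I -> list pt2) (phi : I -> pt2 -> X) (d : X -> X -> R) : Prop :=
  forall x y : X,
    (forall st, chain verts phi st x y -> d x y <= chain_len st) /\
    (forall eps, 0 < eps ->
       exists st, chain verts phi st x y /\ chain_len st < d x y + eps).

Definition seg_meet {X : Type} (d : X -> X -> R) (a b c e : X) (p : X) : Prop :=
  seg d a b p /\ seg d c e p.

(* Main.v *)
Require Import Defs.
From Stdlib Require Import Reals List Permutation Lra.
Import ListNotations.
Open Scope R_scope.

Definition Bet {X : Type} (d : X -> X -> R) a z b := d a z + d z b = d a b.

Lemma met_nonneg {X : Type} (d : X -> X -> R) : is_metric d ->
  (forall x, d x x = 0) /\ (forall x y, 0 <= d x y).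
Proof.
  intros [Hz [Hs Ht]]. assert (H0 : forall x, d x x = 0) by (intro; apply Hz; auto).
  split; auto. intros x y. pose proof (Ht x y x). rewrite H0, (Hs y x) in H. lra.
Qed.

Lemma seg_bet {X : Type} (d : X -> X -> R) : is_metric d ->
  (forall a b, exists g, geodesic d g a b) ->
  forall a b z, seg d a b z <-> Bet d a z b.
Proof.
  intros Hm Hg a b z. pose proof (met_nonneg d Hm) as [H0 Hnn].
  destruct Hm as [Hz [Hs Ht]]. split.
  - intros [g [[g0 [gD gi]] [t [Ht' ->]]]]. unfold Bet.
    pose proof (Hnn a b).
    pose proof (gi 0 t ltac:(lra) ltac:(lra)) as E1.
    pose proof (gi t (d a b) ltac:(lra) ltac:(lra)) as E2.
    rewrite g0 in E1. rewrite gD in E2.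
    rewrite E1, E2. unfold Rabs; destruct Rcase_abs; destruct Rcase_abs; lra.
  - intros HB. unfold Bet in HB.
    destruct (Hg a z) as [g1 [g10 [g1D g1i]]].
    destruct (Hg z b) as [g2 [g20 [g2D g2i]]].
    pose proof (Hnn a z). pose proof (Hnn z b).
    remember (d a z) as D1. remember (d z b) as D2.
    assert (Mix : forall s t, 0 <= s <= D1 -> D1 < t <= D1 + D2 ->
                  d (g1 s) (g2 (t - D1)) = t - s).
    { intros s t Hs1 Ht1.
      assert (E1 : d (g1 s) z = D1 - s).
      { rewrite <- g1D at 1. rewrite g1i by lra. unfold Rabs; destruct Rcase_abs; lra. }
      assert (E2 : d z (g2 (t - D1)) = t - D1).
      { rewrite <- g20 at 1. rewrite g2i by lra. unfold Rabs; destruct Rcase_abs; lra. }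
      assert (E3 : d (g2 (t - D1)) b = D1 + D2 - t).
      { rewrite <- g2D at 1. rewrite g2i by lra. unfold Rabs; destruct Rcase_abs; lra. }
      assert (E4 : d a (g1 s) = s).
      { rewrite <- g10 at 1. rewrite g1i by lra. unfold Rabs; destruct Rcase_abs; lra. }
      pose proof (Ht (g1 s) z (g2 (t - D1))).
      pose proof (Ht a (g1 s) b).
      pose proof (Ht (g1 s) (g2 (t - D1)) b).
      lra. }
    exists (fun t => if Rle_dec t D1 then g1 t else g2 (t - D1)).
    split; [split; [|split]|].
    + destruct (Rle_dec 0 D1); [exact g10| lra].
    + rewrite <- HB. destruct (Rle_dec (D1 + D2) D1).
      * assert (D2 = 0) by lra. replace (D1 + D2) with D1 by lra.
        rewrite g1D. apply Hz. congruence.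
      * replace (D1 + D2 - D1) with D2 by ring. exact g2D.
    + intros s t Hs1 Ht1. rewrite <- HB in Hs1, Ht1.
      destruct (Rle_dec s D1), (Rle_dec t D1).
      * apply g1i; lra.
      * rewrite Mix by lra. unfold Rabs; destruct Rcase_abs; lra.
      * rewrite Hs, Mix by lra. unfold Rabs; destruct Rcase_abs; lra.
      * rewrite g2i by lra. f_equal. ring.
    + exists D1. split; [lra|]. destruct (Rle_dec D1 D1); [|lra]. congruence.
Qed.

Lemma gen {X : Type} (d : X -> X -> R) : is_metric d ->
  forall A B C E A' B' C' E' p p1 : X,
  (forall q, d A q + d q B + d C q + d q E = d A' q + d q B' + d C' q + d q E') ->
  Bet d A' p1 B' -> Bet d C' p1 E' -> Bet d A p B -> Bet d C p E ->
  Bet d A' p B' /\ Bet d C' p E'.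
Proof.
  intros [Hz [Hs Ht]] A B C E A' B' C' E' p p1 Hq H1 H2 H3 H4. unfold Bet in *.
  pose proof (Hq p). pose proof (Hq p1).
  pose proof (Ht A' p B'). pose proof (Ht C' p E').
  pose proof (Ht A p1 B). pose proof (Ht C p1 E).
  split; lra.
Qed.

Lemma psum (f : nat -> R) (l l' : list nat) : Permutation l l' ->
  fold_right Rplus 0 (map f l) = fold_right Rplus 0 (map f l').
Proof.
  induction 1; simpl; try lra.
Qed.

Theorem lemma8p2 :
  forall (X I : Type) (verts : I -> list pt2) (phi : I -> pt2 -> X)
         (d : X -> X -> R),
    polygonal_complex verts phi ->
    intrinsic_metric verts phi d ->
    CAT0 d ->
    forall x1 x2 x3 x4 : X,
      ((exists p, seg_meet d x1 x2 x3 x4 p) ->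
         (forall p, seg_meet d x1 x3 x2 x4 p -> seg_meet d x1 x2 x3 x4 p) /\
         (forall p, seg_meet d x1 x4 x2 x3 p -> seg_meet d x1 x2 x3 x4 p)) /\
      (let x := fun n : nat => nth n [x1; x2; x3; x4] x1 in
       forall i j k l i' j' k' l' : nat,
         Permutation [i; j; k; l] [0%nat; 1%nat; 2%nat; 3%nat] ->
         Permutation [i'; j'; k'; l'] [0%nat; 1%nat; 2%nat; 3%nat] ->
         (exists p, seg_meet d (x i) (x j) (x k) (x l) p) ->
         (exists p, seg_meet d (x i') (x j') (x k') (x l') p) ->
         forall p, seg_meet d (x i) (x j) (x k) (x l) p <->
                   seg_meet d (x i') (x j') (x k') (x l') p).
Proof.
  intros X I verts phi d _ _ [Hm [Hg _]] x1 x2 x3 x4.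
  assert (SM : forall a b c e p, seg_meet d a b c e p <-> Bet d a p b /\ Bet d c p e).
  { intros. unfold seg_meet. rewrite !(seg_bet d Hm Hg). tauto. }
  assert (Hsym : forall u v, d u v = d v u) by apply Hm.
  split.
  - intros [p Hp]. rewrite SM in Hp. destruct Hp as [Hp1 Hp2].
    split; intros q Hq; rewrite SM in *; destruct Hq as [Hq1 Hq2].
    + apply (gen d Hm x1 x3 x2 x4 x1 x2 x3 x4 q p); auto.
      intros r. pose proof (Hsym r x3). pose proof (Hsym r x2). lra.
    + apply (gen d Hm x1 x4 x2 x3 x1 x2 x3 x4 q p); auto.
      intros r. pose proof (Hsym r x3). pose proof (Hsym r x2).
      pose proof (Hsym r x4). lra.
  - intros x.
    assert (Hsum : forall a b c e, Permutation [a;b;c;e] [0%nat;1%nat;2%nat;3%nat] ->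
      forall q, d (x a) q + d q (x b) + d (x c) q + d q (x e)
                = d (x 0%nat) q + d (x 1%nat) q + d (x 2%nat) q + d (x 3%nat) q).
    { intros a b c e HP q. pose proof (psum (fun n => d (x n) q) _ _ HP) as E.
      cbn [map fold_right] in E.
      pose proof (Hsym q (x b)). pose proof (Hsym q (x e)). lra. }
    intros i j k l i' j' k' l' P P' [p0 H0] [p1 H1] p.
    rewrite SM in H0, H1. rewrite !SM.
    destruct H0, H1.
    split; intros [Ha Hb].
    + apply (gen d Hm (x i) (x j) (x k) (x l) (x i') (x j') (x k') (x l') p p1); auto.
      intro q. rewrite (Hsum _ _ _ _ P q), (Hsum _ _ _ _ P' q). reflexivity.
    + apply (gen d Hm (x i') (x j') (x k') (x l') (x i) (x j) (x k) (x l) p p0); auto.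
      intro q. rewrite (Hsum _ _ _ _ P q), (Hsum _ _ _ _ P' q). reflexivity.
Qed.
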